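(* Let $(G,G_+,\Sigma)$ be a scaled ordered abelian group such that $(G,G_+)$ is weakly unperforated, and suppose that $n\,\hat{\cdot}\,\Sigma=G_+$ for some $n\in\mathbb{N}$. Then $\Sigma=G_+$.
   Context: A scaled ordered abelian group is a triple $(G,G_+,\Sigma)$ where $(G,G_+)$ is an ordered abelian group and $\Sigma\subseteq G_+$ satisfies: (i) for all $x_1,x_2\in\Sigma$ there is $x\in\Sigma$ with $x_1\le x$, $x_2\le x$; (ii) if $x\in G_+$, $y\in\Sigma$ and $x\le y$ then $x\in\Sigma$; (iii) for every $x\in G_+$ there are $y\in\Sigma$ and $k\in\mathbb{N}$ with $x\le ky$. For such $\Sigma$, $n\,\hat{\cdot}\,\Sigma$ denotes the set of $y\in G_+$ such that $0\le y\le nx$ for some $x\in\Sigma$. An ordered abelian group $(G,G_+)$ is weakly unperforated if (i) whenever $x\in G$, $m\in\mathbb{N}$ and $mx\in G_+$, there is a torsion element $t$ with $x+t\in G_+$ and $mt=0$; and (ii) whenever $y\in G_+$, $t$ is torsion, $n\in\mathbb{N}$ and $ny+t\in G_+$, then $y\pm t\in G_+$. *)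

(* Defs.v *)
From HB Require Import structures.
From mathcomp Require Import all_boot all_algebra.
Set Implicit Arguments. Unset Strict Implicit. Unset Printing Implicit Defensive.
Import GRing.Theory.
Local Open Scope ring_scope.

Definition ordered_group (G : zmodType) (Gp : G -> Prop) : Prop :=
  [/\ Gp 0,
      (forall x y, Gp x -> Gp y -> Gp (x + y)) &
      (forall x, Gp x -> Gp (- x) -> x = 0)].

Definition gle (G : zmodType) (Gp : G -> Prop) (x y : G) : Prop := Gp (y - x).

Definition is_scale (G : zmodType) (Gp : G -> Prop) (S : G -> Prop) : Prop :=
  [/\ (forall x, S x -> Gp x),
      (forall x1 x2, S x1 -> S x2 ->
          exists x, [/\ S x, gle Gp x1 x & gle Gp x2 x]),
      (forall x y, Gp x -> S y -> gle Gp x y -> S x) &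
      (forall x, Gp x -> exists y k, S y /\ gle Gp x (y *+ k))].

Definition scaled_ordered_group (G : zmodType) (Gp S : G -> Prop) : Prop :=
  ordered_group Gp /\ is_scale Gp S.

Definition hat_mul (G : zmodType) (Gp : G -> Prop) (n : nat) (S : G -> Prop)
  : G -> Prop :=
  fun y => Gp y /\ exists x, S x /\ gle Gp 0 y /\ gle Gp y (x *+ n).

Definition torsion (G : zmodType) (t : G) : Prop :=
  exists k : nat, (0 < k)%N /\ t *+ k = 0.

Definition weakly_unperforated (G : zmodType) (Gp : G -> Prop) : Prop :=
  (forall (x : G) (m : nat), (0 < m)%N -> Gp (x *+ m) ->
     exists t, [/\ torsion t, Gp (x + t) & t *+ m = 0]) /\
  (forall (y t : G) (n : nat), Gp y -> torsion t -> (0 < n)%N ->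
     Gp (y *+ n + t) -> Gp (y + t) /\ Gp (y - t)).

(* Main.v *)
Require Import Defs.
From mathcomp Require Import all_boot all_algebra.
Import GRing.Theory.
Local Open Scope ring_scope.

Lemma gp_muln {G : zmodType} {Gp : G -> Prop} :
  ordered_group Gp -> forall x k, Gp x -> Gp (x *+ k).
Proof.
case=> G0 GD _ x k Hx; elim: k => [|k IH]; first by rewrite mulr0n.
by rewrite mulrS; apply: GD.
Qed.

Theorem proposition1p10 (G : zmodType) (Gp S : G -> Prop) :
  scaled_ordered_group Gp S ->
  weakly_unperforated Gp ->
  (exists n : nat, (0 < n)%N /\ (forall y, hat_mul Gp n S y <-> Gp y)) ->
  forall x, S x <-> Gp x.
Proof.
move=> [Hog [SG Sdir Sher _]] [WU1 WU2] [n [n0 Hn]] x.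
have Hog' := Hog; case: Hog' => G0 GD _.
split; first exact: SG.
move=> Gx.
have [_ [s [Ss [_ Hs]]]] := (Hn (x *+ n)).2 (gp_muln Hog x n Gx).
rewrite /gle -mulrnBl in Hs.
have [t [tor Hst tn]] := WU1 _ _ n0 Hs.
have Gs := SG _ Ss.
have Gspt : Gp (s + t).
  by have := GD _ _ Hst Gx; rewrite -addrA [t + x]addrC addrA subrK.
have Gs1 : Gp (s *+ 1 + t) by rewrite mulr1n.
have [_ Gsmt] := WU2 s t 1%N Gs tor isT Gs1.
have Gz : Gp (s *+ n - t).
  case: n n0 {Hn Hs WU1 tn} => // n _.
  by rewrite mulrSr -addrA; apply: GD => //; apply: gp_muln.
have [_ [s2 [Ss2 [_ Hs2]]]] := (Hn _).2 Gz.
have [s' [Ss' Hss' Hs2s']] := Sdir _ _ Ss Ss2.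
have Hy : Gp ((s' - s) *+ n + t).
  have := GD _ _ (gp_muln Hog _ n Hs2s') Hs2.
  rewrite /gle.
  have -> : (s' - s2) *+ n + (s2 *+ n - (s *+ n - t)) = (s' - s) *+ n + t.
    rewrite !mulrnBl opprB addrA subrK.
    by rewrite addrCA addrC.
  by [].
have [_ H] := WU2 _ _ _ Hss' tor n0 Hy.
apply: (Sher x s') => //.
rewrite /gle.
have := GD _ _ H Hst.
have -> : s' - s - t + (s - x + t) = s' - x.
  by rewrite [s - x + t]addrC addrA subrK addrA subrK.
by [].
Qed.
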